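(* Let $n,k\ge s$ and let $\lambda$ be a partition with at most $k-s$ parts. Then $$R^{n-1}_{k-s}\circ\cdots\circ R^{s+1}_{k-s}\circ R^{s}_{k-s}\big(\Delta_\lambda(c_1,\ldots,c_s)\big)=\sum_{S\in\binom{[n]}{s}}\frac{\Delta_\lambda(\gamma_S)\cdot\prod_{i\in\bar S}\gamma_i^k}{\prod_{i\in\bar S}\prod_{j\in S}(\gamma_i-\gamma_j)},$$ where $\binom{[n]}{s}$ is the set of $s$-element subsets of $[n]=\{1,\ldots,n\}$, $\bar S=[n]\setminus S$, and the left side is regarded as a symmetric polynomial in $\gamma_1,\ldots,\gamma_n$ with $c_i$ the $i$-th elementary symmetric polynomial.
   Context: In $\mathbb{Z}[c_1,\ldots,c_m]$, $\Delta_\lambda(c_1,\ldots,c_m)=\det(c_{\lambda_i+j-i})_{i,j}$ with $c_0=1$, $c_r=0$ for $r<0$ or $r>m$. When $c_1,\ldots,c_m$ are identified with the elementary symmetric polynomials in variables $\gamma_1,\ldots,\gamma_m$, $\Delta_\lambda(\gamma_S)$ denotes $\Delta_\lambda(c_1,\ldots,c_s)$ expressed in $\gamma_1,\ldots,\gamma_s$ with $\gamma_i$, $i\in S$, substituted for them. The width of a monomial in the $c_i$ is its number of factors; the width of a polynomial is the maximum width of its terms. $P^m_w$ is the space of polynomials of width $\le w$ in $\mathbb{Z}[c_1,\ldots,c_m]$; every $p\in P^m_w$ has a unique expression $p=\sum_\lambda a_\lambda\Delta_\lambda(c_1,\ldots,c_m)$ over partitions $\lambda=(\lambda_1,\ldots,\lambda_w)$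 with at most $w$ nonzero parts (padded by zeros). The raising operator $R^m_w:P^m_w\to P^{m+1}_w$ is $\sum_\lambda a_\lambda\Delta_\lambda(c_1,\ldots,c_m)\mapsto\sum_\lambda a_\lambda\Delta_{(\lambda_1+1,\ldots,\lambda_w+1)}(c_1,\ldots,c_{m+1})$. When $n=s$ the composition on the left is the identity. *)

(* Defs.v *)
From HB Require Import structures.
From mathcomp Require Import all_boot all_order all_algebra.
From mathcomp Require Import fraction.
From mathcomp Require Export mpoly.
Set Implicit Arguments. Unset Strict Implicit. Unset Printing Implicit Defensive.
Import GRing.Theory.
Local Open Scope ring_scope.

(* Entry c_{a - i} of the Jacobi-Trudi type matrix, with c_0 = 1 and
   c_r = 0 for r < 0.  (c_r = 0 for r > m is taken care of by the choice of c.) *)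
Definition centry (R : ringType) (c : nat -> R) (a i : nat) : R :=
  if (a < i)%N then 0 else if (a - i == 0)%N then 1 else c (a - i)%N.

(* Delta_lambda(c) = det (c_{lambda_i + j - i})_{i,j}, lambda given as a
   w-tuple of parts (padded by zeros); indices i,j are 0-based here,
   which does not change lambda_i + j - i. *)
Definition Delta (R : comRingType) (w : nat) (c : nat -> R) (lam : w.-tuple nat) : R :=
  \det (\matrix_(i < w, j < w) centry c (tnth lam i + j)%N i).

(* the variables c_1, ..., c_m of Z[c_1,...,c_m] : c_r = 'X_(r-1) for 1 <= r <= m,
   c_r = 0 for r > m (the value at r = 0 is never used by centry). *)
Definition cvar (m r : nat) : {mpoly int[m]} := \sum_(i < m | i.+1 == r) 'X_i.

Definition is_partition (w : nat) (lam : w.-tuple nat) : bool := sorted geq lam.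

Definition raise (w : nat) (lam : w.-tuple nat) : w.-tuple nat := map_tuple succn lam.

(* Graph of the raising operator R^m_w : P^m_w -> P^{m+1}_w:
   q = R^m_w p  iff  p = sum a_lambda Delta_lambda(c_1..c_m) and
   q = sum a_lambda Delta_{lambda+1}(c_1..c_{m+1}) for some finitely supported
   family of integer coefficients indexed by partitions with at most w parts. *)
Definition raising_rel (w m : nat) (p : {mpoly int[m]}) (q : {mpoly int[m.+1]}) : Prop :=
  exists (L : seq (w.-tuple nat)) (a : w.-tuple nat -> int),
    all (@is_partition w) L /\
    p = \sum_(l <- L) a l *: Delta (cvar m) l /\
    q = \sum_(l <- L) a l *: Delta (cvar m.+1) (raise l).

Definition esymS (n : nat) (S : {set 'I_n}) (r : nat) : {mpoly int[n]} :=
  \sum_(T : {set 'I_n} | (T \subset S) && (#|T| == r)) \prod_(j in T) 'X_j.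

Definition elem_tuple (n : nat) : n.-tuple {mpoly int[n]} :=
  [tuple mesym n int i.+1 | i < n].

Notation "x %:F" := (@FracField.tofrac _ x).

(* Main.v *)
Require Import Defs.
From HB Require Import structures.
From mathcomp Require Import all_boot all_order all_algebra.
From mathcomp Require Import fraction mpoly.
From mathcomp Require Import ring zify.
Import GRing.Theory.
Local Open Scope ring_scope.
Set Implicit Arguments. Unset Strict Implicit. Unset Printing Implicit Defensive.


Section ES.
Variables (K : comRingType) (n : nat) (x : 'I_n -> K).

Definition es (B : {set 'I_n}) (r : nat) : K :=
  \sum_(T : {set 'I_n} | (T \subset B) && (#|T| == r)) \prod_(j in T) x j.

Lemma es0 (B : {set 'I_n}) : es B 0 = 1.
Proof.
rewrite /es (bigD1 set0) /=; last by rewrite sub0set cards0.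
rewrite big_set0 big1 ?addr0 // => T /andP[/andP[_ /eqP /cards0_eq ->]].
by rewrite eqxx.
Qed.

Lemma es_big (B : {set 'I_n}) r : (#|B| < r)%N -> es B r = 0.
Proof.
move=> H; rewrite /es big1 // => T /andP[sTB /eqP cT].
by move: (subset_leq_card sTB); rewrite cT leqNgt H.
Qed.

Lemma es_rec (B : {set 'I_n}) i r : i \in B ->
  es B r.+1 = es (B :\ i) r.+1 + x i * es (B :\ i) r.
Proof.
move=> iB; rewrite /es (bigID (fun T : {set 'I_n} => i \in T)) /= addrC; congr (_ + _).
  apply: eq_bigl => T; rewrite subsetD1 andbAC; congr (_ && _).
rewrite mulr_sumr.
rewrite (reindex_onto (fun T => i |: T) (fun T => T :\ i)) /=; last first.
  by move=> T /andP[_ iT]; rewrite setD1K.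
apply: eq_big => T.
  rewrite setU11 andbT subUset sub1set iB /=.
  rewrite subsetD1; case iT: (i \in T) => /=.
    rewrite andbF; apply/negbTE/negP => /andP[_ /eqP /setP /(_ i)].
    by rewrite !inE eqxx iT.
  rewrite setU1K; last by rewrite iT.
  by rewrite eqxx !andbT cardsU1 iT /= add1n eqSS.
move=> /andP[/andP[/andP[_ _] _] /eqP H].
have iT : i \notin T by rewrite -H !inE eqxx.
by rewrite big_setU1.
Qed.
End ES.


Section Vieta.
Variables (K : comRingType) (n : nat) (x : 'I_n -> K).
Local Notation es := (es x).

Definition PP (B : {set 'I_n}) : {poly K} := \prod_(j in B) ('X - (x j)%:P).

Definition cc (B : {set 'I_n}) m : K :=
  if (m <= #|B|)%N then (-1) ^+ (#|B| - m) * es B (#|B| - m) else 0.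

Lemma PP_rec (B : {set 'I_n}) i : i \in B -> PP B = ('X - (x i)%:P) * PP (B :\ i).
Proof. by move=> iB; rewrite /PP (big_setD1 i). Qed.

Lemma cc_rec (B : {set 'I_n}) i m : i \in B ->
  cc B m = (if m is m'.+1 then cc (B :\ i) m' else 0) - x i * cc (B :\ i) m.
Proof.
move=> iB; have cB : #|B| = #|B :\ i|.+1 by rewrite (cardsD1 i B) iB.
rewrite /cc cB; set N := #|B :\ i|.
case: m => [|m].
  rewrite leq0n !subn0 sub0r (es_rec x _ iB) (es_big x (leqnn _)) add0r.
  by rewrite exprS mulN1r mulNr mulrCA.
rewrite ltnS subSS; case: (ltngtP m N) => Hm.
- have Hm' : (m.+1 <= N)%N by [].
  have -> : (N - m = (N - m.+1).+1)%N by rewrite subnSK.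
  by rewrite (es_rec x _ iB) exprS; ring.
- by rewrite mulr0 subr0.
- by rewrite Hm subnn !expr0 !mul1r !es0 mulr0 subr0.
Qed.

Lemma coefPP (B : {set 'I_n}) m : (PP B)`_m = cc B m.
Proof.
move: {2}#|B| (erefl #|B|) m => N; elim: N B => [|N IH] B cB m.
  move/eqP: cB; rewrite cards_eq0 => /eqP ->.
  rewrite /PP big_set0 coef1 /cc cards0.
  by case: m => [|m] //=; rewrite expr0 mul1r es0.
have [i iB] : exists i, i \in B.
  by apply/set0Pn; rewrite -card_gt0 cB.
rewrite (PP_rec iB) (cc_rec _ iB) mulrBl coefB coefXM coefCM.
have cB' : #|B :\ i| = N by move: cB; rewrite (cardsD1 i B) iB => -[].
by case: m => [|m] /=; rewrite !IH.
Qed.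

Lemma size_PP (B : {set 'I_n}) : (size (PP B) <= #|B|.+1)%N.
Proof. by apply/leq_sizeP => j hj; rewrite coefPP /cc leqNgt hj. Qed.

Lemma PP_top (B : {set 'I_n}) : (PP B)`_#|B| = 1.
Proof. by rewrite coefPP /cc leqnn subnn expr0 mul1r es0. Qed.

End Vieta.


Section Lagrange.
Variables (K : fieldType) (n : nat) (x : 'I_n -> K) (xinj : injective x).
Local Notation es := (es x).
Local Notation PP := (PP x).

Definition den (A : {set 'I_n}) i := \prod_(j in A :\ i) (x i - x j).

Lemma den_neq0 (A : {set 'I_n}) i : den A i != 0.
Proof.
rewrite /den prodf_seq_neq0; apply/allP => j _; apply/implyP.
rewrite !inE => /andP[ji _]; rewrite subr_eq0; apply/eqP => /xinj H.
by rewrite H eqxx in ji.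
Qed.

Lemma hornerPP (B : {set 'I_n}) y : (PP B).[y] = \prod_(j in B) (y - x j).
Proof. by rewrite /PP horner_prod; apply: eq_bigr => j _; rewrite hornerXsubC. Qed.

Lemma card_D1 (A : {set 'I_n}) i : i \in A -> #|A :\ i| = (#|A|).-1.
Proof. by move=> iA; rewrite (cardsD1 i A) iA. Qed.

Lemma lagrange (A : {set 'I_n}) (f : {poly K}) : (size f <= #|A|)%N ->
  f = \sum_(i in A) (f.[x i] / den A i) *: PP (A :\ i).
Proof.
move=> sf; apply/eqP; rewrite -subr_eq0; set g := _ - _.
apply: contraT => gnz.
have sg : (size g <= #|A|)%N.
  apply/leq_sizeP => j hj; rewrite coefB coef_sum.
  rewrite (leq_sizeP _ _ sf) // sub0r big1 ?oppr0 // => i iA.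
  have A0 : (0 < #|A|)%N by apply/card_gt0P; exists i.
  rewrite coefZ coefPP /cc card_D1 // ifF ?mulr0 //.
  by apply/negbTE; rewrite -ltnNge; lia.
have := max_poly_roots gnz (rs := [seq x i | i in A]).
rewrite map_inj_uniq ?enum_uniq // size_map -cardE.
move=> H; suff : (#|A| < size g)%N by rewrite ltnNge sg.
apply: H => //; apply/allP => y /imageP [k kA ->].
rewrite /root /g hornerD hornerN horner_sum (bigD1 k) //= big1.
  by rewrite addr0 hornerZ hornerPP -/(den A k) divfK ?den_neq0 // subrr.
move=> i /andP[iA ik]; rewrite hornerZ hornerPP (bigD1 k) /=.
  by rewrite subrr mul0r mulr0.
by rewrite !inE eq_sym ik.
Qed.


Lemma lag1 (A : {set 'I_n}) : A != set0 ->
  \sum_(i in A) x i ^+ (#|A|.-1) / den A i = 1.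
Proof.
move=> A0; have cA : (0 < #|A|)%N by rewrite card_gt0.
have sf : (size ('X^(#|A|.-1) : {poly K}) <= #|A|)%N by rewrite size_polyXn; lia.
have := congr1 (fun q : {poly K} => q`_(#|A|.-1)) (lagrange sf).
rewrite /= coefXn eqxx coef_sum => H.
transitivity (true%:R : K); last by []. rewrite H; apply: eq_bigr => i iA.
by rewrite coefZ -(card_D1 iA) PP_top mulr1 hornerXn.
Qed.

Lemma lagA (A : {set 'I_n}) p :
  \sum_(i in A) x i ^+ #|A| / den A i * es (A :\ i) p = es A p.+1.
Proof.
have [->|A0] := eqVneq A set0.
  by rewrite big_set0 es_big // cards0.
have cA : (0 < #|A|)%N by rewrite card_gt0.
have [N cN] : {N | #|A| = N} by exists #|A|.
rewrite cN in cA *.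
have sf : (size ('X^N - PP A)%R <= #|A|)%N.
  rewrite cN; apply/leq_sizeP => j hj; rewrite coefB coefXn coefPP /cc cN.
  case: (ltngtP j N) => H; first by lia.
    by rewrite subr0.
  by rewrite H subnn expr0 mul1r es0 subrr.
have hf : forall i, i \in A -> ('X^N - PP A).[x i] = x i ^+ N.
  move=> i iA; rewrite hornerD hornerN hornerXn hornerPP (bigD1 i) //=.
  by rewrite subrr mul0r subr0.
have [pN|pN] := leqP N p.
  rewrite es_big ?big1 ?cN // => i iA.
  by rewrite es_big ?mulr0 // card_D1 // cN; lia.
have := congr1 (fun q : {poly K} => q`_(N.-1 - p)%N) (lagrange sf).
rewrite /= coefB coefXn coefPP /cc cN.
rewrite (_ : (N.-1 - p == N)%N = false); last by apply/negbTE; lia.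
rewrite ifT; last by lia.
have -> : (N - (N.-1 - p) = p.+1)%N by lia.
rewrite sub0r coef_sum => H.
have ss : forall y : K, (-1) ^+ p * ((-1) ^+ p * y) = y.
  by move=> y; rewrite mulrA -expr2 sqrr_sign mul1r.
have : \sum_(i in A) x i ^+ N / den A i * es (A :\ i) p = (-1) ^+ p *
   \sum_(i in A) ((('X^N - PP A).[x i] / den A i) *: PP (A :\ i))`_(N.-1 - p)%N.
  rewrite mulr_sumr; apply: eq_bigr => i iA.
  rewrite coefZ hf // coefPP /cc card_D1 // cN ifT; last by lia.
  have -> : (N.-1 - (N.-1 - p) = p)%N by lia.
  by rewrite mulrCA ss.
by move=> ->; rewrite -H exprS mulN1r mulNr opprK ss.
Qed.

End Lagrange.


Section OneStep.
Variables (K : fieldType) (n : nat) (x : 'I_n -> K) (xinj : injective x).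
Local Notation es := (es x).
Local Notation den := (den x).

Lemma centry_es (B : {set 'I_n}) t a : (a <= t)%N -> centry (es B) t a = es B (t - a).
Proof.
move=> h; rewrite /centry ltnNge h /=; case: eqP => [->|//].
by rewrite es0.
Qed.

Lemma centry_rec (B : {set 'I_n}) i t a : i \in B ->
  centry (es B) t.+1 a = centry (es (B :\ i)) t.+1 a + x i * centry (es (B :\ i)) t a.
Proof.
move=> iB; case: (ltnP t.+1 a) => h1.
  by rewrite /centry h1 (ltnW h1) mulr0 addr0.
case: (ltnP t a) => h2.
  have e : a = t.+1 by lia.
  by rewrite /centry h2 e ltnn subnn /= mulr0 addr0.
rewrite !centry_es // subSn // (es_rec x _ iB).
done.
Qed.

Lemma sum_delta m (F : 'I_m -> K) (j : nat) (hj : (j < m)%N) :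
  \sum_(b < m) F b * ((b : nat) == j)%:R = F (Ordinal hj).
Proof.
rewrite (bigD1 (Ordinal hj)) //= eqxx mulr1 big1 ?addr0 // => b hb.
rewrite (_ : ((b : nat) == j) = false) ?mulr0 //; apply/negbTE.
by apply: contra hb => /eqP e; apply/eqP/val_inj.
Qed.

Lemma one_step (A : {set 'I_n}) (w : nat) (lam : w.-tuple nat) : A != set0 ->
  Delta (es A) (raise lam) =
  \sum_(i in A) x i ^+ (w + #|A|.-1) / den A i * Delta (es (A :\ i)) lam.
Proof.
move=> A0; have cA : (0 < #|A|)%N by rewrite card_gt0.
case: w lam => [|w] lam.
  rewrite /Delta det_mx00 -(lag1 xinj A0); apply: eq_bigr => i _.
  by rewrite det_mx00 mulr1.
pose N := \matrix_(a < w.+1, c < w.+1) centry (es A) (tnth (raise lam) a + c) a.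
pose Ni i := \matrix_(a < w.+1, c < w.+1)
   (if (c < w)%N then N a c else centry (es (A :\ i)) (tnth lam a + w) a).
pose Mi i := \matrix_(a < w.+1, b < w.+1) centry (es (A :\ i)) (tnth lam a + b) a.
pose Bi i := \matrix_(b < w.+1, c < w.+1)
   (if (c < w)%N then (((b : nat) == c.+1)%:R + x i * ((b : nat) == c)%:R)
    else ((b : nat) == c)%:R).
have h1 : forall i, i \in A -> Ni i = Mi i *m Bi i.
  move=> i iA; apply/matrixP => a c; rewrite /Ni /Mi /Bi /N !mxE.
  under eq_bigr do rewrite !mxE.
  case: ifP => hc.
    under eq_bigr do rewrite mulrDr mulrCA.
    rewrite big_split /= -mulr_sumr (sum_delta _ (hc : (c.+1 < w.+1)%N)).
    rewrite (sum_delta _ (ltn_ord c)) /= tnth_map addSn (centry_rec _ _ iA).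
    by rewrite addnS.
  have cw : (c : nat) = w by move: (ltn_ord c) hc; lia.

  by rewrite (sum_delta _ (ltn_ord c)) /= cw.
have h2 : forall i, \det (Bi i) = x i ^+ w.
  move=> i; rewrite det_trig; last first.
    apply/is_trig_mxP => b c hbc; rewrite mxE.
    have e1 : ((b : nat) == c.+1) = false by apply/negbTE; lia.
    have e2 : ((b : nat) == c) = false by apply/negbTE; lia.
    by rewrite e1 e2 mulr0 addr0; case: ifP.
  rewrite big_ord_recr /= !mxE ltnn eqxx mulr1.
  rewrite (eq_bigr (fun _ => x i)); last first.
    move=> b _; rewrite !mxE /= ltn_ord eqxx mulr1.
    have e : ((b : nat) == b.+1) = false by apply/negbTE; lia.
    by rewrite e add0r.
  by rewrite prodr_const card_ord.
have h3 : forall i, \det (Ni i) = \sum_(a < w.+1)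
     centry (es (A :\ i)) (tnth lam a + w) a * cofactor N a ord_max.
  move=> i; rewrite (expand_det_col _ ord_max); apply: eq_bigr => a _.
  rewrite /Ni !mxE ltnn; congr (_ * _); rewrite /cofactor; congr (_ * _).
  congr (\det _); apply/matrixP => b c; rewrite !mxE.
  have e : (lift ord_max c < w)%N.
    case: c => c' hc /=; have hc' : (c' < w)%N := hc; by rewrite /bump (leqNgt w c') hc'.
  by rewrite e.
rewrite /Delta -/N (expand_det_col _ ord_max).
have -> : \sum_(i in A) x i ^+ (w.+1 + #|A|.-1) / den A i *
    \det (\matrix_(i0, j) centry (es (A :\ i)) (tnth lam i0 + j) i0) =
  \sum_(i in A) x i ^+ #|A| / den A i * \det (Ni i).
  apply: eq_bigr => i iA; rewrite h1 // det_mulmx h2.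
  have -> : (w.+1 + #|A|.-1 = #|A| + w)%N by lia.
  by rewrite exprD -/(Mi i); ring.
rewrite [RHS](eq_bigr (fun i => \sum_(a < w.+1) x i ^+ #|A| / den A i *
   (centry (es (A :\ i)) (tnth lam a + w) a * cofactor N a ord_max))); last first.
  by move=> i _; rewrite h3 mulr_sumr.
rewrite [RHS]exchange_big /=; apply: eq_bigr => a _.
under eq_bigr do rewrite mulrA.
rewrite -mulr_suml; congr (_ * _); symmetry.
have ha : (a <= tnth lam a + w)%N by move: (ltn_ord a); lia.
under eq_bigr do rewrite centry_es //.
rewrite (lagA xinj) /N mxE tnth_map centry_es; last by rewrite /=; lia.
by congr (es A _); rewrite /=; lia.
Qed.

End OneStep.


Definition sh w (d : nat) (lam : w.-tuple nat) : w.-tuple nat := map_tuple (addn d) lam.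

Lemma sh0 w (lam : w.-tuple nat) : sh 0 lam = lam.
Proof. by apply: eq_from_tnth => a; rewrite tnth_map. Qed.

Lemma shS w d (lam : w.-tuple nat) : sh d.+1 lam = raise (sh d lam).
Proof. by apply: eq_from_tnth => a; rewrite !tnth_map. Qed.

Section Collapse.
Variables (K : fieldType) (n : nat) (x : 'I_n -> K) (xinj : injective x).
Variables (s k : nat) (lam : (k - s).-tuple nat).
Local Notation es := (es x).
Local Notation den := (den x).

Definition G (A S : {set 'I_n}) : K :=
  (\prod_(i in A :\: S) x i ^+ k) / \prod_(i in A :\: S) \prod_(j in S) (x i - x j).

Lemma GAA A : G A A = 1.
Proof. by rewrite /G setDv !big_set0 divr1. Qed.

Lemma key (A S : {set 'I_n}) : (s <= k)%N -> S \subset A -> #|S| = s -> S != A ->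
  \sum_(i in A :\: S) x i ^+ (k - s + #|A|.-1) / den A i * G (A :\ i) S = G A S.
Proof.
move=> sk SA cS SnA; set D := A :\: S.
have D0 : D != set0.
  apply: contra SnA => /eqP D0; rewrite eqEsubset SA /=.
  apply/subsetP => y yA; apply: contraT => yS.
  have : y \in D by rewrite /D !inE yS yA.
  by rewrite D0 inE.
have cD : #|A| = s + #|D|.
  by have := subset_leq_card SA; rewrite /D cardsD (setIidPr SA); lia.
have cD0 : (0 < #|D|)%N by rewrite card_gt0.
rewrite -[RHS]mulr1 -(lag1 xinj D0) mulr_sumr; apply: eq_bigr => i iD.
have iA : i \in A by move: iD; rewrite !inE => /andP[].
have iS : i \notin S by move: iD; rewrite !inE => /andP[].
have eA : A :\ i = S :|: (D :\ i).
  apply/setP => y; rewrite !inE; case: (eqVneq y i) => [->|yi] /=.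
    by rewrite (negbTE iS).
  by case yS: (y \in S) => //=; rewrite (subsetP SA).
have dis : [disjoint S & D :\ i].
  by rewrite -setI_eq0; apply/eqP/setP => y; rewrite /D !inE; case: (y \in S); rewrite /= ?andbF.
have eDi : (A :\ i) :\: S = D :\ i.
  by apply/setP => y; rewrite !inE; case: (y \in S); rewrite ?andbF ?andbT.
rewrite /den eA.
have -> : \prod_(j in S :|: D :\ i) (x i - x j) =
    \prod_(j in S) (x i - x j) * \prod_(j in D :\ i) (x i - x j).
  rewrite -bigU //=; apply: eq_bigl => y; by rewrite !inE.
rewrite /G -eA eDi -/D.
rewrite (big_setD1 i iD) /= (big_setD1 i iD) /=.
rewrite -/D.
have -> : (k - s + #|A|.-1 = k + #|D|.-1)%N by lia.
rewrite exprD !invfM.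
set a := x i ^+ k. set b := x i ^+ #|D|.-1. set c := (\prod_(j in S) _)^-1.
set d := (\prod_(j in D :\ i) (x i - x j))^-1. set e := \prod_(i0 in D :\ i) x i0 ^+ k.
set f := (\prod_(i0 in D :\ i) \prod_(j in S) (x i0 - x j))^-1.
rewrite !mulrA; ring.
Qed.


Lemma Fgen (sk : (s <= k)%N) d : forall A : {set 'I_n}, #|A| = (s + d)%N ->
  Delta (es A) (sh d lam) =
  \sum_(S : {set 'I_n} | (S \subset A) && (#|S| == s)) Delta (es S) lam * G A S.
Proof.
elim: d => [|d IH] A cA.
  rewrite sh0 (bigD1 A) /=; last by rewrite subxx cA addn0 eqxx.
  rewrite GAA mulr1 big1 ?addr0 // => S /andP[/andP[SA /eqP cS] SnA].
  by move: SnA; rewrite eqEcard SA cS cA addn0 leqnn.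
have A0 : A != set0 by rewrite -card_gt0 cA addnS.
rewrite shS (one_step xinj) //.
have cAi : forall i, i \in A -> #|A :\ i| = (s + d)%N.
  by move=> i iA; rewrite card_D1 // cA addnS.
rewrite (eq_bigr (fun i => \sum_(S : {set 'I_n} | (S \subset A :\ i) && (#|S| == s))
   x i ^+ (k - s + #|A|.-1) / den A i * (Delta (es S) lam * G (A :\ i) S))); last first.
  by move=> i iA; rewrite (IH _ (cAi _ iA)) mulr_sumr.
rewrite (exchange_big_dep (fun S : {set 'I_n} => (S \subset A) && (#|S| == s))) /=; last first.
  by move=> i S iA /andP[SAi ->]; rewrite andbT (subset_trans SAi) // subD1set.
apply: eq_bigr => S /andP[SA /eqP cS].
have SnA : S != A by apply/eqP => eSA; move: cA; rewrite -eSA cS; lia.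
under eq_bigr do rewrite mulrCA.
rewrite -mulr_sumr; congr (_ * _).
rewrite -(key sk SA cS SnA); apply: eq_bigl => i.
rewrite subsetD1 cS eqxx andbT SA !inE andbC.
done.
Qed.

End Collapse.


Lemma Delta_morph (R S : comRingType) (f : {rmorphism R -> S}) w (c : nat -> R)
  (lam : w.-tuple nat) : f (Delta c lam) = Delta (fun r => f (c r)) lam.
Proof.
rewrite /Delta -det_map_mx; congr (\det _); apply/matrixP => i j; rewrite !mxE /centry.
by case: ifP => _; [rewrite rmorph0 | case: ifP => _; rewrite ?rmorph1].
Qed.

Lemma Delta_ext (R : comRingType) w (c c' : nat -> R) (lam : w.-tuple nat) :
  (forall r, (0 < r)%N -> c r = c' r) -> Delta c lam = Delta c' lam.
Proof.
move=> H; rewrite /Delta; congr (\det _); apply/matrixP => i j; rewrite !mxE /centry.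
by case: ifP => // _; case: eqP => // /eqP h; rewrite H // lt0n.
Qed.

Lemma mmap_morph (R S T : nzRingType) n (f : R -> S) (h : 'I_n -> S)
  (g : {rmorphism S -> T}) (q : {mpoly R[n]}) :
  g (mmap f h q) = mmap (fun c => g (f c)) (fun i => g (h i)) q.
Proof.
rewrite /mmap rmorph_sum; apply: eq_bigr => m _; rewrite rmorphM /mmap1 rmorph_prod.
by congr (_ * _); apply: eq_bigr => i _; rewrite rmorphXn.
Qed.

Lemma mmap_ext (R S : nzRingType) n (f f' : R -> S) (h h' : 'I_n -> S) (q : {mpoly R[n]}) :
  f =1 f' -> h =1 h' -> mmap f h q = mmap f' h' q.
Proof.
move=> ef eh; rewrite /mmap; apply: eq_bigr => m _; rewrite ef /mmap1.
by congr (_ * _); apply: eq_bigr => i _; rewrite eh.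
Qed.

Section Final.
Variable n : nat.
Local Notation K := {fraction {mpoly int[n]}}.
Definition xx (j : 'I_n) : K := ('X_j : {mpoly int[n]})%:F.

Lemma xx_inj : injective xx.
Proof.
move=> i j /eqP; rewrite /xx tofrac_eq => /eqP e.
have := congr1 (fun q : {mpoly int[n]} => q@_U_(j)%MM) e.
rewrite !mcoeffXU eqxx; case: eqP => // _ /eqP; by rewrite eq_sym oner_eq0.
Qed.

Definition ev m (A : {set 'I_n}) : 'I_m -> K := fun r => es xx A r.+1.
Arguments ev : clear implicits.

Lemma eval_cvar m (A : {set 'I_n}) r : #|A| = m -> (0 < r)%N ->
  mmap intr (ev m A) (cvar m r) = es xx A r.
Proof.
move=> cA r0; rewrite /cvar raddf_sum /=.
under eq_bigr do rewrite mmapX mmap1U.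
case: (leqP r m) => hr.
  have hr' : (r.-1 < m)%N by lia.
  rewrite (bigD1 (Ordinal hr')) /=; last by rewrite prednK.
  rewrite big1 ?addr0 /ev ?prednK // => i /andP[/eqP ei ne].
  by case/eqP: ne; apply: val_inj => /=; rewrite -ei.
rewrite big1 ?es_big ?cA // => i /eqP ei; move: (ltn_ord i); lia.
Qed.

Lemma eval_Delta m (A : {set 'I_n}) w (l : w.-tuple nat) : #|A| = m ->
  mmap intr (ev m A) (Delta (cvar m) l) = Delta (es xx A) l.
Proof.
move=> cA; rewrite (Delta_morph (mmap intr (ev m A))); apply: Delta_ext => r r0.
exact: eval_cvar.
Qed.

End Final.

Unset Implicit Arguments.

Theorem mainTheorem6 (n k s : nat) (lam : (k - s).-tuple nat)
    (p : forall m : nat, {mpoly int[m]}) :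
  (s <= n)%N -> (s <= k)%N -> is_partition lam ->
  p s = Delta (cvar s) lam ->
  (forall m : nat, (s <= m < n)%N -> raising_rel (k - s) (p m) (p m.+1)) ->
  ((p n \mPo elem_tuple n) %:F : {fraction {mpoly int[n]}}) =
  \sum_(S : {set 'I_n} | #|S| == s)
     (Delta (esymS S) lam) %:F * (\prod_(i in ~: S) 'X_i ^+ k) %:F
       / (\prod_(i in ~: S) \prod_(j in S) ('X_i - 'X_j)) %:F.
Proof.
move=> sn sk _ Hp0 Hrel.
have IND : forall d, (s + d <= n)%N -> forall A : {set 'I_n}, #|A| = (s + d)%N ->
   mmap intr (@ev n (s + d) A) (p (s + d)%N) = Delta (es (@xx n) A) (sh d lam).
  elim => [|d IH] hd A cA.
    move: cA; rewrite addn0 => cA.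
    by rewrite Hp0 sh0 eval_Delta.
  have hd' : (s + d <= n)%N by lia.
  have hm : (s <= s + d < n)%N by lia.
  have [L [a [_ [e1 e2]]]] := Hrel _ hm.
  move: cA; rewrite addnS => cA.
  have A0 : A != set0 by rewrite -card_gt0 cA.
  have cAi : forall i, i \in A -> #|A :\ i| = (s + d)%N.
    by move=> i iA; rewrite card_D1 // cA.
  rewrite e2 raddf_sum /= shS (one_step (@xx_inj n)) //.
  under eq_bigr do rewrite mmapZ (eval_Delta _ cA) (one_step (@xx_inj n)) // mulr_sumr.
  rewrite exchange_big /=; apply: eq_bigr => i iA.
  rewrite -(IH hd' _ (cAi i iA)) e1 raddf_sum /= mulr_sumr; apply: eq_bigr => l _.
  by rewrite mmapZ (eval_Delta _ (cAi i iA)) mulrCA.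
have H := IND (n - s)%N.
rewrite (subnKC sn) in H.
have {}H := H (leqnn n) setT (etrans (cardsT _) (card_ord n)).
rewrite (Fgen (@xx_inj n) lam sk) ?cardsT ?card_ord ?(subnKC sn) // in H.
rewrite /comp_mpoly mmap_morph.
rewrite (mmap_ext (f' := intr) (h' := @ev n n setT) (p n)); last first.
- move=> i; rewrite /ev tnth_mktuple /mesym rmorph_sum /es.
  by apply: eq_big => [T|T _]; [rewrite subsetT | rewrite rmorph_prod].
- by move=> c /=; rewrite -{1}[c]intz !rmorph_int.
rewrite H; apply: eq_big => S.
  by rewrite subsetT.
move=> _.
rewrite -mulrA /G setTD; congr (_ * _).
  rewrite Delta_morph; apply: Delta_ext => r _.
  rewrite /esymS rmorph_sum /es; apply: eq_bigr => T _.
  by rewrite rmorph_prod.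
rewrite !rmorph_prod; congr (_ / _); apply: eq_bigr => i _.
  by rewrite rmorphXn.
by rewrite rmorph_prod; apply: eq_bigr => j _; rewrite rmorphB.
Qed.
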